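(* Let $\mathcal{R}$ be a cell space with finite stabiliser $G_0$, let $(F_i)_{i\in I}$ be a right Følner net in $\mathcal{R}$ indexed by a directed set $(I,\leq)$, let $E,E'$ be finite subsets of $G/G_0$, and let $T$ be an $(E,E')$-tiling of $\mathcal{R}$. Then there exist a real number $\varepsilon>0$ and an index $i_0\in I$ such that for every $i\in I$ with $i\geq i_0$ we have $|T\cap F_i^{-E}|\geq\varepsilon|F_i|$.
   Context: A cell space $\mathcal{R}$ consists of a group $G$ acting transitively on the left on a nonempty set $M$ via $\triangleright$, a point $m_0\in M$ and a family $(g_{m_0,m})_{m\in M}$ in $G$ with $g_{m_0,m}\triangleright m_0=m$. $G_0$ is the stabiliser of $m_0$ and $G/G_0$ the set of left cosets. The right semi-action $\triangleleft\colon M\times G/G_0\to M$ is $m\triangleleft gG_0=g_{m_0,m}g\triangleright m_0$; for $E\subseteq G/G_0$, $m\triangleleft E=\{m\triangleleft e:e\in E\}$. For $A\subseteq M$, $A^{-E}=\{m\in M: m\triangleleft E\subseteq A\}$. A right Følner net in $\mathcal{R}$ is a net $(F_i)_{i\in I}$ of nonempty finite subsets of $M$ with $\lim_{i}\frac{|F_i\setminus\{m: m\triangleleft\mathfrak{g}\in F_i\}|}{|F_i|}=0$ for every $\mathfrak{g}\in G/G_0$. For $E,E'\subseteq G/G_0$, a subset $T\subseteq M$ is an $(E,E')$-tiling of $\mathcal{R}$ if $(t\triangleleft E)_{t\in T}$ is pairwise disjoint and $(t\triangleleft E')_{t\in T}$ covers $M$. *)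

(* Defs.v *)
From HB Require Import structures.
From mathcomp Require Import all_boot all_order all_algebra.
From mathcomp Require Import finmap.
From mathcomp Require Import boolp reals.
From Stdlib Require Import List.

Set Implicit Arguments.
Unset Strict Implicit.
Unset Printing Implicit Defensive.

Import Order.TTheory GRing.Theory Num.Theory.
Local Open Scope fset_scope.
Local Open Scope ring_scope.

Record cell_space := CellSpace {
  cs_G : Type;
  cs_mul : cs_G -> cs_G -> cs_G;
  cs_one : cs_G;
  cs_inv : cs_G -> cs_G;
  cs_mulA : forall x y z, cs_mul x (cs_mul y z) = cs_mul (cs_mul x y) z;
  cs_mul1g : forall x, cs_mul cs_one x = x;
  cs_mulVg : forall x, cs_mul (cs_inv x) x = cs_one;
  cs_M : choiceType;
  cs_act : cs_G -> cs_M -> cs_M;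
  cs_act1 : forall m, cs_act cs_one m = m;
  cs_actM : forall g h m, cs_act (cs_mul g h) m = cs_act g (cs_act h m);
  cs_trans : forall m m', exists g, cs_act g m = m';
  cs_m0 : cs_M;
  cs_gm : cs_M -> cs_G;
  cs_gmP : forall m, cs_act (cs_gm m) cs_m0 = m
}.

Section CellSpaceDefs.
Variable C : cell_space.
Local Notation G := (cs_G C).
Local Notation M := (cs_M C).

Definition finite_stabiliser : Prop :=
  exists s : list G, forall g, cs_act g (cs_m0 C) = cs_m0 C <-> In g s.

(* Right semi-action  m <| gG0 := g_{m0,m} g |> m0 ; the coset gG0 is given
   by a representative g (the value does not depend on the representative). *)
Definition rsemi (m : M) (g : G) : M := cs_act (cs_mul (cs_gm m) g) (cs_m0 C).

(* Finite subsets E of G/G0 are given by finite lists of representatives. *)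
Definition rsemi_set (m : M) (E : list G) : M -> Prop :=
  fun x => exists2 e, In e E & x = rsemi m e.

Definition shrink (A : M -> Prop) (E : list G) : M -> Prop :=
  fun m => forall e, In e E -> A (rsemi m e).

Definition is_tiling (E E' : list G) (T : M -> Prop) : Prop :=
  (forall t t', T t -> T t' -> t <> t' ->
     forall x, rsemi_set t E x -> rsemi_set t' E x -> False) /\
  (forall m, exists2 t, T t & rsemi_set t E' m).

Definition directed (I : Type) (le : I -> I -> Prop) : Prop :=
  inhabited I /\ (forall i, le i i) /\
  (forall i j k, le i j -> le j k -> le i k) /\
  (forall i j, exists k, le i k /\ le j k).

Definition right_folner_net (R : realType) (I : Type) (le : I -> I -> Prop)
    (F : I -> {fset M}) : Prop :=
  (forall i, F i != fset0) /\
  (forall (g : G) (eps : R), 0 < eps -> exists i0, forall i, le i0 i ->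
     (#|` [fset m in F i | rsemi m g \notin F i] |%:R / #|` F i|%:R : R) < eps).

(* |X| >= r for a possibly infinite X subset M : X contains a finite subset
   with at least r elements *)
Definition card_ge (R : realType) (X : M -> Prop) (r : R) : Prop :=
  exists S : {fset M}, (forall x, x \in S -> X x) /\ r <= #|` S|%:R.

End CellSpaceDefs.

(* Main.v *)
Require Import Defs.
From HB Require Import structures.
From mathcomp Require Import all_boot all_order all_algebra.
From mathcomp Require Import finmap.
From mathcomp Require Import boolp reals.
From Stdlib Require Import List.
From mathcomp Require Import zify ring lra.
Import Order.TTheory GRing.Theory Num.Theory.
Local Open Scope ring_scope.
Local Open Scope fset_scope.

Lemma cs_mulgV (C : cell_space) (x : cs_G C) : cs_mul x (cs_inv x) = cs_one C.
Proof.
rewrite -[LHS](@cs_mul1g C) -{1}(@cs_mulVg C (cs_inv x)).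
rewrite -cs_mulA (cs_mulA (cs_inv x)) (cs_mulVg x) (cs_mul1g).
by rewrite cs_mulVg.
Qed.

Lemma cs_mulg1 (C : cell_space) (x : cs_G C) : cs_mul x (cs_one C) = x.
Proof. by rewrite -(cs_mulVg x) cs_mulA cs_mulgV cs_mul1g. Qed.

Definition Hset (C : cell_space) (S E E' : list (cs_G C)) : list (cs_G C) :=
  flat_map (fun s0 => flat_map (fun e' =>
     List.map (fun e => cs_mul (cs_mul s0 (cs_inv e')) e) E) E') S.

Arguments Hset {C}.

Lemma key (C : cell_space) (S : list (cs_G C))
  (HS : forall g, cs_act g (cs_m0 C) = cs_m0 C <-> In g S)
  (E E' : list (cs_G C)) (m t : cs_M C) (e' : cs_G C) :
  In e' E' -> m = rsemi t e' -> forall e, In e E ->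
  exists2 h, In h (Hset S E E') & rsemi t e = rsemi m h.
Proof.
move=> He' Hm e He.
set x := cs_mul (cs_inv (cs_gm m)) (cs_gm t).
have Hs : In (cs_mul x e') S.
  apply/HS. rewrite /x -cs_mulA !cs_actM.
  rewrite -(cs_actM (cs_gm t) e') -/(rsemi t e') -Hm.
  by rewrite -[X in cs_act _ X](cs_gmP m) -cs_actM cs_mulVg cs_act1.
exists (cs_mul (cs_mul (cs_mul x e') (cs_inv e')) e).
  apply/in_flat_map; exists (cs_mul x e'); split => //.
  apply/in_flat_map; exists e'; split => //.
  by apply/in_map_iff; exists e.
rewrite /rsemi -(cs_mulA x) cs_mulgV cs_mulg1 /x !cs_mulA cs_mulgV cs_mul1g //.
Qed.
Definition badh (C : cell_space) (F : {fset cs_M C}) (h : cs_G C) : {fset cs_M C} :=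
  [fset m in F | rsemi m h \notin F].
Arguments badh {C}.
Definition Bad (C : cell_space) (F : {fset cs_M C}) (L : list (cs_G C)) : {fset cs_M C} :=
  foldr (fun h acc => badh F h `|` acc) fset0 L.
Arguments Bad {C}.

Lemma Bad_mem (C : cell_space) (F : {fset cs_M C}) L m :
  m \in F -> m \notin Bad F L -> forall h, In h L -> rsemi m h \in F.
Proof.
move=> mF; rewrite /Bad; elim: L => [|h0 L IH] //= nB h [<-|hL].
- apply: contraNT nB => nh; rewrite in_fsetU; apply/orP; left.
  by rewrite /badh !inE mF nh.
- apply: IH hL; apply: contra nB; rewrite in_fsetU => ->; exact: orbT.
Qed.

Lemma Bad_card (R : realType) (C : cell_space) (F : {fset cs_M C}) L (d : R) :
  (forall h, In h L -> (#|` badh F h|%:R : R) <= d) ->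
  (#|` Bad F L|%:R : R) <= (size L)%:R * d.
Proof.
rewrite /Bad; elim: L => [|h L IH] Hd /=; first by rewrite mul0r.
apply: (le_trans (y := (#|` badh F h| + #|` Bad F L|)%N%:R)).
  by rewrite ler_nat; exact: (leq_card_fsetU _ _).1.
rewrite natrD -addn1 natrD mulrDl mul1r [X in _ <= X]addrC.
apply: lerD; first by apply: Hd; left.
by apply: IH => h' hh; apply: Hd; right.
Qed.

Definition Cov (C : cell_space) (St : {fset cs_M C}) (L : list (cs_G C)) : {fset cs_M C} :=
  foldr (fun e' acc => [fset rsemi t e' | t in St] `|` acc) fset0 L.
Arguments Cov {C}.

Lemma Cov_mem (C : cell_space) (St : {fset cs_M C}) L t e' :
  t \in St -> In e' L -> rsemi t e' \in Cov St L.
Proof.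
move=> tS; rewrite /Cov; elim: L => [|e L IH] //= [<-|eL]; rewrite in_fsetU; apply/orP.
- by left; apply/imfsetP; exists t.
- by right; apply: IH.
Qed.

Lemma Cov_card (C : cell_space) (St : {fset cs_M C}) L :
  (#|` Cov St L| <= size L * #|` St|)%N.
Proof.
rewrite /Cov; elim: L => [|e L IH] /=; first by [].
apply: leq_trans (leq_card_fsetU _ _).1 _.
rewrite mulSn leq_add //.
apply: leq_trans (leq_imfset_card _ _ _) _.
apply: (uniq_leq_size (enum_finmem_uniq _)) => x; rewrite enum_finmemE; exact: id.
Qed.

Lemma folner_all (R : realType) (C : cell_space) (I : Type) (le : I -> I -> Prop)
    (F : I -> {fset cs_M C}) (d : R) (L : list (cs_G C)) :
  directed le -> right_folner_net R le F -> 0 < d ->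
  exists i0, forall i, le i0 i -> forall h, In h L ->
    (#|` [fset m in F i | rsemi m h \notin F i] |%:R / #|` F i|%:R : R) < d.
Proof.
move=> [[i00] [_ [Htr Hub]]] [_ Hf] d0.
elim: L => [|h L [iL HL]]; first by exists i00.
have [ih Hh] := Hf h d d0.
have [k [k1 k2]] := Hub ih iL.
exists k => i ki h' [<-|hL].
- by apply: Hh; apply: Htr ki.
- by apply: HL => //; apply: Htr ki.
Qed.

Theorem lemma7 (R : realType) (C : cell_space) (I : Type) (le : I -> I -> Prop)
    (F : I -> {fset cs_M C}) (E E' : list (cs_G C)) (T : cs_M C -> Prop) :
  finite_stabiliser C ->
  directed le ->
  right_folner_net R le F ->
  is_tiling E E' T ->
  exists eps : R, 0 < eps /\ exists i0 : I, forall i, le i0 i ->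
    card_ge (fun m => T m /\ shrink (fun x => x \in F i) E m) (eps * #|` F i|%:R).
Proof.
move=> [S HS] Hdir Hfol [_ Hcov].
pose H := Hset S E E'. pose k := size H. pose n := size E'.
pose d : R := (2 * (k + 1)%:R)^-1.
have d0 : 0 < d by rewrite /d invr_gt0 mulr_gt0 // ltr0n addn1.
have [i0 Hi0] := @folner_all R C I le F d H Hdir Hfol d0.
exists (2 * (n + 1)%:R)^-1; split; first by rewrite invr_gt0 mulr_gt0 // ltr0n addn1.
exists i0 => i Hi.
have Fne := Hfol.1 i.
have tile : forall m, {t | T t /\ rsemi_set t E' m}.
  move=> m; apply: cid; have [t Tt Ht] := Hcov m; by exists t.
pose Good := F i `\` Bad (F i) H.
pose St := [fset proj1_sig (tile m) | m in Good].
exists St; split.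
  move=> x /imfsetP [m mG ->]; have [Tt [e' He' Hm]] := proj2_sig (tile m).
  split => // e He.
  have [h hH ->] := @key C S HS E E' _ _ _ He' Hm e He.
  move: mG; rewrite in_fsetD => /andP [nB mF].
  exact: (@Bad_mem C (F i) H m mF nB h hH).
have h1 : (#|` Good| <= n * #|` St|)%N.
  apply: leq_trans (@Cov_card C St E'); apply: fsubset_leq_card.
  apply/fsubsetP => m mG; have [Tt [e' He' Hm]] := proj2_sig (tile m).
  rewrite Hm; apply: (@Cov_mem C St E' _ e' _ He'); by apply/imfsetP; exists m.
have h2 : (#|` F i| <= #|` Good| + #|` Bad (F i) H|)%N.
  rewrite /Good cardfsD.
  have := fsubset_leq_card (fsubsetIr (F i) (Bad (F i) H)).
  have := fsubset_leq_card (fsubsetIl (F i) (Bad (F i) H)).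
  lia.
have Fpos : (0 : R) < #|` F i|%:R by rewrite ltr0n cardfs_gt0.
have h3 : (#|` Bad (F i) H|%:R : R) <= k%:R * (d * #|` F i|%:R).
  apply: Bad_card => h hH.
  have := Hi0 i Hi h hH; rewrite ltr_pdivrMr // => /ltW; exact.
have h4 : (2 * #|` Bad (F i) H| <= #|` F i|)%N.
  rewrite -(ler_nat R) natrM.
  apply: le_trans (ler_wpM2l _ h3) _; first by [].
  have -> : (2%N%:R * (k%:R * (d * #|` F i|%:R)) : R) = (k%:R / (k + 1)%:R) * #|` F i|%:R.
    rewrite /d; field; by apply: lt0r_neq0; rewrite ltr_wpDl // ler0n.
  apply: ler_piMl; first exact: ltW.
  by rewrite ler_pdivrMr ?mul1r ?ler_nat ?leq_addr // ltr0n addn1.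
have h5 : (#|` F i| <= 2 * (n + 1) * #|` St|)%N by nia.
rewrite mulrC ler_pdivrMr; last by rewrite mulr_gt0 // ltr0n addn1.
by rewrite mulrC -!natrM ler_nat.
Qed.
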